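(* Fix $\alpha\in[\tfrac12,1)$. An ideal SAIT for $n$ keys with total number of accesses $m$ can be built in $O(m)$ time and uses $O(m^{\alpha/2}\cdot n + m^{\alpha})$ memory.
   Context: A Generic Self-Adjusting Tree (GSAT) with degree function $D$ for a set of integer keys with access counts $ac_i\ge1$ consists of $m=\sum_i ac_i$, an array of $k\le\lceil D(m)\rceil$ representative keys with their access counts, and $k+1$ child subtrees that are GSATs for the keys lying strictly before the first representative, strictly between consecutive representatives, and strictly after the last; every node stores at least one key (empty key sets give no node), so the tree has at most $n$ nodes. $m(T')$ is the total access count of keys in subtree $T'$. A GSAT is ideal if each child $T_j$ of the root satisfies $m(T_j)\le m/(D(m)+1)$ and each child is ideal. A SAIT (Self-Adjusting Interpolation Search Tree) is a GSAT with $D(m)=\sqrt m$ in which, additionally, each node whose subtree has total access count $m'$ stores an interpolation array $ID$ of size $\lceil m'^{\alpha}\rceil$, which is built in $O(m'^{\alpha})$ time after the node's representatives are chosen. Cost model for the rest of construction: given keys sorted with prefix sums of access counts, a node with subtree access count $m'$ costs $O(D(m'))$ time and memory plus $O(\log n)$ time per representative (binary search on prefix sums), besides recursive construction of its children. *)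

(* Defs.v *)
From Stdlib Require Import Reals Lra ZArith List Sorted.
Import ListNotations.
Open Scope R_scope.

(** A key with its access count. *)
Definition key := (Z * nat)%type.

Definition mass_list (L : list key) : nat := fold_right (fun p s => (snd p + s)%nat) 0%nat L.

Definition ceilR (x : R) : R := IZR (- Int_part (- x)).

(** Trees: [Tip] = empty subtree (no node); [Node reps ch] = a node storing the
    array [reps] of representative keys (with access counts) and [ch] children. *)
Inductive tree : Type :=
| Tip : tree
| Node : list key -> list tree -> tree.

Fixpoint interleave (cs : list (list key)) (rs : list key) : list key :=
  match cs, rs with
  | c :: cs', r :: rs' => c ++ r :: interleave cs' rs'
  | c :: _, [] => c
  | [], _ => rs
  end.

Fixpoint flatten (t : tree) : list key :=
  match t with
  | Tip => []
  | Node reps ch => interleave (map flatten ch) reps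
  end.

Definition mass (t : tree) : nat := mass_list (flatten t).
Definition nkeys (t : tree) : nat := length (flatten t).

Inductive gsat_ok (D : R -> R) : tree -> Prop :=
| gsat_tip : gsat_ok D Tip
| gsat_node (reps : list key) (ch : list tree) :
    reps <> [] ->
    length ch = S (length reps) ->
    INR (length reps) <= ceilR (D (INR (mass (Node reps ch)))) ->
    (forall c, In c ch -> gsat_ok D c) ->
    gsat_ok D (Node reps ch).

Definition valid_keys (L : list key) : Prop :=
  StronglySorted (fun a b => (fst a < fst b)%Z) L /\ Forall (fun p => (1 <= snd p)%nat) L.

(** [t] is a GSAT with degree function D for the key set L: since L is sorted
    and the in-order traversal of t is L, each child holds exactly the keys
    strictly before / between / after the representatives. *)
Definition is_gsat (D : R -> R) (t : tree) (L : list key) : Prop :=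
  gsat_ok D t /\ flatten t = L.

Inductive ideal (D : R -> R) : tree -> Prop :=
| ideal_tip : ideal D Tip
| ideal_node (reps : list key) (ch : list tree) :
    (forall c, In c ch ->
       ideal D c /\
       INR (mass c) <= INR (mass (Node reps ch)) / (D (INR (mass (Node reps ch))) + 1)) ->
    ideal D (Node reps ch).

Definition Dsait (x : R) : R := sqrt x.

Definition sumR (l : list R) : R := fold_right Rplus 0 l.

(** Construction-time charge (cost model, up to constant factors):
    per node with subtree access count m' and n' subtree keys:
    D(m') + k * (1 + ln n') [binary search on that node's range of prefix sums]
    + ceil(m'^alpha) [building the interpolation array ID]. *)
Fixpoint build_time (alpha : R) (t : tree) : R :=
  match t with
  | Tip => 0
  | Node reps ch =>
      let m' := INR (mass (Node reps ch)) in
      let n' := INR (nkeys (Node reps ch)) in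
      Dsait m' + INR (length reps) * (1 + ln n') + ceilR (Rpower m' alpha)
      + sumR (map (build_time alpha) ch)
  end.

(** Memory charge: O(D(m')) per node plus the ID array of size ceil(m'^alpha). *)
Fixpoint memory (alpha : R) (t : tree) : R :=
  match t with
  | Tip => 0
  | Node reps ch =>
      let m' := INR (mass (Node reps ch)) in
      Dsait m' + ceilR (Rpower m' alpha) + sumR (map (memory alpha) ch)
  end.

(* Main.v *)
Require Import Defs.
From Stdlib Require Import Reals Lra Lia List Permutation ZArith.
Import ListNotations.
Open Scope R_scope.

Lemma mass_list_app (a b : list key) :
  mass_list (a ++ b) = (mass_list a + mass_list b)%nat.
Proof. induction a as [|x a IH]; simpl; [reflexivity| rewrite IH; lia]. Qed.

Lemma mass_list_perm (a b : list key) : Permutation a b -> mass_list a = mass_list b.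
Proof. induction 1; simpl; lia. Qed.

Lemma interleave_perm (rs : list key) : forall cs,
  length cs = S (length rs) ->
  Permutation (interleave cs rs) (concat cs ++ rs).
Proof.
  induction rs as [|r rs IH]; intros cs Hl.
  - destruct cs as [|c [|c' cs]]; simpl in *; try lia.
    rewrite !app_nil_r. apply Permutation_refl.
  - destruct cs as [|c cs]; simpl in *; try lia.
    rewrite <- app_assoc. apply Permutation_app_head.
    eapply perm_trans. apply perm_skip. apply IH. lia.
    apply Permutation_middle.
Qed.

Lemma I1 (x : key) c : forall (cs : list (list key)) rs, length cs = length rs ->
  interleave (cs ++ [c ++ [x]]) rs = interleave (cs ++ [c]) rs ++ [x].
Proof.
  induction cs as [|c0 cs IH]; intros rs Hl; destruct rs as [|r rs]; simpl in *; try lia.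
  - reflexivity.
  - rewrite IH by lia. rewrite <- app_assoc. reflexivity.
Qed.

Lemma I2 (x : key) c : forall (cs : list (list key)) rs, length cs = length rs ->
  interleave (cs ++ [c; []]) (rs ++ [x]) = interleave (cs ++ [c]) rs ++ [x].
Proof.
  induction cs as [|c0 cs IH]; intros rs Hl; destruct rs as [|r rs]; simpl in *; try lia.
  - reflexivity.
  - rewrite IH by lia. rewrite <- app_assoc. reflexivity.
Qed.

Lemma greedy (B : R) (HB : 0 <= B) (L : list key) :
  exists cs c rs, length cs = length rs /\ interleave (cs ++ [c]) rs = L /\
    (forall d, In d (cs ++ [c]) -> INR (mass_list d) <= B) /\
    INR (length rs) * B + INR (mass_list c) <= INR (mass_list L) /\
    (rs <> [] -> INR (length rs) * B + INR (mass_list c) < INR (mass_list L)).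
Proof.
  induction L as [|x L IH] using rev_ind.
  - exists [], [], []. simpl. repeat split; auto.
    + intros d [<-|[]]. simpl. lra.
    + lra.
    + intros H; congruence.
  - destruct IH as (cs & c & rs & Hl & Hi & Hd & Hb & Hs).
    rewrite mass_list_app. simpl. rewrite Nat.add_0_r.
    destruct (Rle_dec (INR (mass_list c + snd x)) B) as [Hle|Hgt].
    + exists cs, (c ++ [x]), rs. repeat split; auto.
      * rewrite I1 by auto. rewrite Hi. reflexivity.
      * intros d Hd'. apply in_app_or in Hd' as [Hd'|[<-|[]]].
        -- apply Hd. apply in_or_app; auto.
        -- rewrite mass_list_app. simpl. rewrite Nat.add_0_r. exact Hle.
      * rewrite mass_list_app. simpl. rewrite Nat.add_0_r. rewrite !plus_INR.
        rewrite plus_INR in Hle. lra.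
      * intros Hn. specialize (Hs Hn). rewrite mass_list_app. simpl. rewrite Nat.add_0_r.
        rewrite !plus_INR. lra.
    + exists (cs ++ [c]), [], (rs ++ [x]). repeat split.
      * rewrite !length_app. simpl. lia.
      * rewrite <- app_assoc. simpl. rewrite I2 by auto. rewrite Hi. reflexivity.
      * intros d Hd'. rewrite <- app_assoc in Hd'. apply in_app_or in Hd' as [Hd'|[<-|[<-|[]]]].
        -- apply Hd. apply in_or_app; auto.
        -- apply Hd. apply in_or_app; simpl; auto.
        -- simpl. lra.
      * rewrite length_app, plus_INR, plus_INR. simpl.
        rewrite plus_INR in Hgt. lra.
      * intros _. rewrite length_app, plus_INR, plus_INR. simpl.
        rewrite plus_INR in Hgt. lra.
Qed.

Lemma ceil_lt x : ceilR x < x + 1.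
Proof. unfold ceilR. destruct (base_Int_part (-x)). rewrite opp_IZR. lra. Qed.

Lemma ceil_ge x : x <= ceilR x.
Proof. unfold ceilR. destruct (base_Int_part (-x)). rewrite opp_IZR. lra. Qed.

Lemma nat_le_ceil (k : nat) x : INR k < x + 1 -> INR k <= ceilR x.
Proof.
  intros H. pose proof (ceil_ge x). unfold ceilR in *.
  rewrite INR_IZR_INZ in *.
  assert (Hz : IZR (Z.of_nat k) < IZR (- Int_part (- x) + 1)) by (rewrite plus_IZR; lra).
  apply lt_IZR in Hz. apply IZR_le. lia.
Qed.

Lemma build_children (P : tree -> Prop) (D : list (list key)) :
  (forall d, In d D -> exists t, P t /\ flatten t = d) ->
  exists ts, map flatten ts = D /\ forall t, In t ts -> P t.
Proof.
  induction D as [|d D IH]; intros H.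
  - exists []. simpl; split; auto; tauto.
  - destruct (H d (or_introl eq_refl)) as (t & Pt & Ft).
    destruct IH as (ts & E & Hts). { intros; apply H; simpl; auto. }
    exists (t :: ts). simpl. split. congruence. intros t' [<-|Ht']; auto.
Qed.

Lemma existence : forall n (L : list key), length L = n ->
  Forall (fun p => (1 <= snd p)%nat) L ->
  exists t, gsat_ok Dsait t /\ flatten t = L /\ ideal Dsait t.
Proof.
  intros n. induction n as [n IH] using (well_founded_induction lt_wf).
  intros L HL Hf.
  destruct L as [|x L'] eqn:EL.
  { exists Tip. repeat constructor. }
  rewrite <- EL in *.
  set (m := INR (mass_list L)).
  assert (Hm1 : 1 <= m).
  { unfold m. subst L. simpl. inversion Hf; subst. rewrite plus_INR.
    apply le_INR in H1. simpl in H1. pose proof (pos_INR (mass_list L')). lra. }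
  set (s := sqrt m).
  assert (Hs : 0 < s) by (apply sqrt_lt_R0; lra).
  set (B := m / (s + 1)).
  assert (HB0 : 0 <= B) by (unfold B; apply Rle_mult_inv_pos; lra).
  assert (HBm : B < m).
  { unfold B. apply Rmult_lt_reg_r with (s+1). lra. field_simplify; nra. }
  destruct (greedy B HB0 L) as (cs & c & rs & Hl & Hi & Hd & Hb & Hst).
  assert (Hrs : rs <> []).
  { intros ->. destruct cs; simpl in Hl; try lia. simpl in Hi.
    assert (INR (mass_list c) <= B) by (apply Hd; simpl; auto). fold m in Hb.
    subst c. fold m in H. lra. }
  specialize (Hst Hrs). fold m in Hst.
  assert (Hk : INR (length rs) <= ceilR s).
  { apply nat_le_ceil. pose proof (pos_INR (mass_list c)).
    assert (INR (length rs) * B < m) by lra.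
    unfold B in H0. apply Rmult_lt_reg_r with (m / (s+1)).
    apply Rdiv_lt_0_compat; lra.
    replace ((s + 1) * (m / (s + 1))) with m by (field; lra). lra. }
  set (D := cs ++ [c]).
  assert (HlD : length D = S (length rs)) by (unfold D; rewrite length_app; simpl; lia).
  assert (Hperm : Permutation L (concat D ++ rs)).
  { rewrite <- Hi. apply interleave_perm. exact HlD. }
  destruct (build_children (fun t => gsat_ok Dsait t /\ ideal Dsait t) D) as (ts & Ets & Pts).
  { intros d Hd'.
    assert (Hlen : (length d < n)%nat).
    { subst n. rewrite (Permutation_length Hperm), length_app.
      destruct rs; [congruence|]. simpl.
      assert (length d <= length (concat D))%nat.
      { clear -Hd'. induction D as [|e D IH]; simpl in *; [tauto|].
        rewrite length_app. destruct Hd' as [->|H]; [lia|]. specialize (IH H); lia. }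
      lia. }
    destruct (IH _ Hlen d eq_refl) as (t & G & F & I).
    - rewrite Forall_forall in *. intros y Hy. apply Hf.
      apply (Permutation_in _ (Permutation_sym Hperm)). apply in_or_app. left.
      apply in_concat. eauto.
    - exists t. auto. }
  exists (Node rs ts).
  assert (Hfl : flatten (Node rs ts) = L) by (simpl; rewrite Ets; exact Hi).
  assert (Hmass : INR (mass (Node rs ts)) = m) by (unfold mass; rewrite Hfl; reflexivity).
  repeat split.
  - constructor; auto.
    + rewrite <- (length_map flatten), Ets. exact HlD.
    + rewrite Hmass. exact Hk.
    + intros t Ht; apply Pts; auto.
  - exact Hfl.
  - constructor. intros t Ht. split. apply Pts; auto.
    rewrite Hmass. fold s. fold B.
    unfold mass. apply Hd. fold D. rewrite <- Ets. apply in_map. exact Ht.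
Qed.

Definition cnt (L : list key) := Forall (fun p => (1 <= snd p)%nat) L.

Lemma len_le_mass L : cnt L -> (length L <= mass_list L)%nat.
Proof. induction 1; simpl; lia. Qed.

Lemma sumR_le {A} (f g : A -> R) l : (forall c, In c l -> f c <= g c) ->
  sumR (map f l) <= sumR (map g l).
Proof.
  induction l as [|a l IH]; simpl; intros H; [lra|].
  pose proof (H a (or_introl eq_refl)). assert (sumR (map f l) <= sumR (map g l)) by (apply IH; auto). lra.
Qed.

Lemma sumR_scal {A} (a : R) (g : A -> R) l :
  sumR (map (fun c => a * g c) l) = a * sumR (map g l).
Proof. induction l; simpl; [ring| rewrite IHl; ring]. Qed.

Lemma sum_mass ch : sumR (map (fun c => INR (mass c)) ch) = INR (mass_list (concat (map flatten ch))).
Proof.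
  induction ch as [|c ch IH]; simpl; [reflexivity|].
  rewrite mass_list_app, plus_INR, IH. reflexivity.
Qed.

Lemma sum_nkeys ch : sumR (map (fun c => INR (nkeys c)) ch) = INR (length (concat (map flatten ch))).
Proof.
  induction ch as [|c ch IH]; simpl; [reflexivity|].
  rewrite length_app, plus_INR, IH. reflexivity.
Qed.

Lemma node_perm reps ch : length ch = S (length reps) ->
  Permutation (flatten (Node reps ch)) (concat (map flatten ch) ++ reps).
Proof. intros H. simpl. apply interleave_perm. rewrite length_map. exact H. Qed.

Lemma in_concat_mass (c : tree) ch : In c ch ->
  (mass_list (flatten c) <= mass_list (concat (map flatten ch)))%nat.
Proof.
  induction ch as [|d ch IH]; simpl; [tauto|]. rewrite mass_list_app.
  intros [->|H]; [lia|]. specialize (IH H). lia.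
Qed.

Record node_info (reps : list key) (ch : list tree) := {
  ni_mass : INR (mass (Node reps ch)) = INR (mass_list (concat (map flatten ch))) + INR (mass_list reps);
  ni_keys : INR (nkeys (Node reps ch)) = INR (length (concat (map flatten ch))) + INR (length reps);
  ni_repmass : 1 <= INR (mass_list reps);
  ni_replen : 1 <= INR (length reps);
  ni_cnt : forall c, In c ch -> cnt (flatten c);
  ni_child : forall c, In c ch -> INR (mass c) <= INR (mass (Node reps ch)) - 1;
  ni_m1 : 1 <= INR (mass (Node reps ch));
  ni_nk : 1 <= INR (nkeys (Node reps ch)) <= INR (mass (Node reps ch))
}.

Lemma get_info reps ch : reps <> [] -> length ch = S (length reps) ->
  cnt (flatten (Node reps ch)) -> node_info reps ch.
Proof.
  intros Hne Hl Hc. pose proof (node_perm _ _ Hl) as Hp.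
  assert (Hcr : cnt reps).
  { unfold cnt in *. rewrite Forall_forall in *. intros y Hy. apply Hc.
    apply (Permutation_in _ (Permutation_sym Hp)). apply in_or_app; auto. }
  assert (Hlr : (1 <= length reps)%nat) by (destruct reps; simpl; [congruence|lia]).
  pose proof (len_le_mass _ Hcr).
  assert (Hm : mass (Node reps ch) = (mass_list (concat (map flatten ch)) + mass_list reps)%nat).
  { unfold mass. rewrite (mass_list_perm _ _ Hp), mass_list_app. reflexivity. }
  assert (Hk : nkeys (Node reps ch) = (length (concat (map flatten ch)) + length reps)%nat).
  { unfold nkeys. rewrite (Permutation_length Hp), length_app. reflexivity. }
  pose proof (len_le_mass _ Hc) as Hlm. fold (nkeys (Node reps ch)) in Hlm.
  change (mass_list (flatten (Node reps ch))) with (mass (Node reps ch)) in Hlm.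
  constructor.
  - rewrite Hm, plus_INR. reflexivity.
  - rewrite Hk, plus_INR. reflexivity.
  - apply (le_INR 1). lia.
  - apply (le_INR 1). lia.
  - intros c Hin. unfold cnt in *. rewrite Forall_forall in *. intros y Hy. apply Hc.
    apply (Permutation_in _ (Permutation_sym Hp)). apply in_or_app. left.
    apply in_concat. exists (flatten c). split; auto. apply in_map; auto.
  - intros c Hin. pose proof (in_concat_mass c ch Hin) as Hic.
    assert (H2 : (mass c + 1 <= mass (Node reps ch))%nat) by (rewrite Hm; unfold mass; lia).
    apply le_INR in H2. rewrite plus_INR in H2. simpl in H2. lra.
  - apply (le_INR 1). rewrite Hm. lia.
  - split; [apply (le_INR 1); rewrite Hk; lia| apply le_INR; exact Hlm].
Qed.

Lemma mem_bound (alpha : R) (Ha : 0 <= alpha) : forall t, gsat_ok Dsait t ->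
  cnt (flatten t) -> forall M, INR (mass t) <= M ->
  memory alpha t <= INR (nkeys t) * (sqrt M + Rpower M alpha + 1).
Proof.
  induction 1 as [|reps ch Hne Hl Hk Hch IH]; intros Hc M HM.
  - simpl. unfold nkeys; simpl. lra.
  - destruct (get_info reps ch Hne Hl Hc) as [Em Ek Hrm Hrl Hcc Hchm Hm1 Hnk].
    set (m := INR (mass (Node reps ch))) in *.
    set (Q := sqrt M + Rpower M alpha + 1).
    assert (HQ : 0 <= Q) by (unfold Q; pose proof (sqrt_pos M); unfold Rpower; pose proof (exp_pos (alpha * ln M)); lra).
    assert (Hsum : sumR (map (memory alpha) ch) <= sumR (map (fun c => Q * INR (nkeys c)) ch)).
    { apply sumR_le. intros c Hin. rewrite Rmult_comm. apply IH; auto.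
      pose proof (Hchm c Hin). fold m in H. lra. }
    rewrite sumR_scal, sum_nkeys in Hsum.
    simpl memory. fold m.
    assert (sqrt m <= sqrt M) by (apply sqrt_le_1_alt; lra).
    assert (Rpower m alpha <= Rpower M alpha) by (apply Rle_Rpower_l; lra).
    pose proof (ceil_lt (Rpower m alpha)).
    rewrite Ek. unfold Dsait.
    assert (Q <= INR (length reps) * Q) by (pose proof (Rmult_le_compat_r Q _ _ HQ Hrl); lra).
    assert (sqrt m + ceilR (Rpower m alpha) <= Q) by (unfold Q; lra).
    lra.
Qed.

Lemma Rpower_pos x y : 0 < Rpower x y.
Proof. unfold Rpower. apply exp_pos. Qed.

Lemma rp_ge1 m e : 1 <= m -> 0 <= e -> 1 <= Rpower m e.
Proof. intros. rewrite <- (Rpower_O m) by lra. apply Rle_Rpower; lra. Qed.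

Lemma ln_le' a b : 0 < a -> a <= b -> ln a <= ln b.
Proof. intros Ha [H|H]. apply Rlt_le, ln_increasing; auto. subst; lra. Qed.

Lemma ln_lt_self y : 0 < y -> ln y < y.
Proof.
  intros Hy. destruct (Req_dec (ln y) 0) as [E|E]. lra.
  pose proof (exp_ineq1 _ E). rewrite exp_ln in H by auto. lra.
Qed.

Lemma node_cost (alpha m n k : R) : 1/2 <= alpha < 1 -> 1 <= m -> 1 <= n <= m ->
  0 <= k <= ceilR (sqrt m) ->
  sqrt m + k * (1 + ln n) + ceilR (Rpower m alpha) <= 13 * Rpower m ((1 + alpha) / 2).
Proof.
  intros Ha Hm Hn Hk.
  set (y := Rpower m (/4)). set (G := Rpower m ((1 + alpha) / 2)).
  assert (Hy1 : 1 <= y) by (apply rp_ge1; lra).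
  assert (Hsq : sqrt m = y * y).
  { unfold y. rewrite <- Rpower_plus, <- Rpower_sqrt by lra. f_equal. field. }
  assert (Hy3 : y * y * y <= G).
  { unfold y, G. rewrite <- !Rpower_plus. apply Rle_Rpower; lra. }
  assert (HaG : Rpower m alpha <= G) by (unfold G; apply Rle_Rpower; lra).
  assert (Hln : 0 <= ln n <= 4 * y).
  { split. rewrite <- ln_1. apply ln_le'; lra.
    apply Rle_trans with (ln m). apply ln_le'; lra.
    assert (ln y = / 4 * ln m) by (unfold y; apply ln_Rpower).
    pose proof (ln_lt_self y ltac:(lra)). lra. }
  pose proof (ceil_lt (sqrt m)). pose proof (ceil_lt (Rpower m alpha)).
  assert (Hkk : k * (1 + ln n) <= (y * y + 1) * (1 + 4 * y)).
  { apply Rmult_le_compat; lra. }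
  assert (y <= y * y) by nra. assert (y * y <= y * y * y) by nra.
  nra.
Qed.

Lemma rp_neg_anti (a b e : R) : 0 < a <= b -> 0 <= e -> Rpower b (- e) <= Rpower a (- e).
Proof.
  intros Hab He. rewrite !Rpower_Ropp. apply Rinv_le_contravar. apply Rpower_pos.
  apply Rle_Rpower_l; lra.
Qed.

Lemma final_ineq (A G x q P p : R) : 1 <= x -> q * x = 1 -> 0 <= G -> 0 < p ->
  G = Rpower x p -> A = 14 * Rpower 14 p + 1 ->
  14 * G + q <= A + G * x.
Proof.
  intros Hx Hq HG Hp EG EA.
  assert (0 < q <= 1). { split; nra. }
  destruct (Rle_dec 14 x) as [H14|H14].
  - assert (14 * G <= G * x) by nra.
    pose proof (Rpower_pos 14 p). lra.
  - assert (G <= Rpower 14 p) by (rewrite EG; apply Rle_Rpower_l; lra). nra.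
Qed.

Lemma build_bound (alpha g A : R) (Ha : 1/2 <= alpha < 1) (Hg : g = (1 + alpha) / 2)
  (HA : A = 14 * Rpower 14 (2 * g / (1 - g)) + 1) :
  forall t, gsat_ok Dsait t -> ideal Dsait t -> cnt (flatten t) ->
  build_time alpha t <= A * INR (mass t) - INR (mass t) * Rpower (INR (mass t)) (g - 1).
Proof.
  assert (HA1 : 1 <= A) by (pose proof (Rpower_pos 14 (2 * g / (1 - g))); lra).
  induction 1 as [|reps ch Hne Hl Hk Hch IH]; intros Hid Hc.
  - simpl. unfold mass; simpl. lra.
  - destruct (get_info reps ch Hne Hl Hc) as [Em Ek Hrm Hrl Hcc Hchm Hm1 Hnk].
    inversion Hid as [|reps' ch' Hidc]; subst reps' ch'.
    set (m := INR (mass (Node reps ch))) in *.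
    set (s := sqrt m).
    assert (Hs0 : 0 < s) by (apply sqrt_lt_R0; lra).
    assert (Hss : s * s = m) by (apply sqrt_sqrt; lra).
    set (q := Rpower m ((g - 1) / 2)).
    assert (Hqs : q = Rpower s (- (1 - g))).
    { unfold q, s. rewrite <- Rpower_sqrt, Rpower_mult by lra. f_equal. field. }
    assert (Hchild : forall c, In c ch -> build_time alpha c <= (A - q) * INR (mass c)).
    { intros c Hin. destruct (Hidc c Hin) as [Hic Hmc]. fold m in Hmc.
      specialize (IH c Hin Hic (Hcc c Hin)).
      set (mc := INR (mass c)) in *.
      assert (Hmcs : mc <= s).
      { apply Rle_trans with (m / (s + 1)); auto. unfold Dsait; fold s.
        apply Rmult_le_reg_r with (s + 1). lra. field_simplify; nra. }
      pose proof (pos_INR (mass c)) as Hmc0. fold mc in Hmc0.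
      destruct (Req_dec mc 0) as [E|E].
      - rewrite E in *. lra.
      - assert (q <= Rpower mc (g - 1)).
        { rewrite Hqs. replace (g - 1) with (- (1 - g)) by ring. apply rp_neg_anti; lra. }
        assert (mc * q <= mc * Rpower mc (g - 1)) by (apply Rmult_le_compat_l; lra).
        lra. }
    pose proof (sumR_le _ _ ch Hchild) as Hsum.
    rewrite (sumR_scal (A - q) (fun c => INR (mass c))), sum_mass in Hsum.
    set (S := INR (mass_list (concat (map flatten ch)))) in *.
    assert (HS : 0 <= S <= m - 1) by (split; [apply pos_INR| lra]).
    set (G := Rpower m g).
    assert (Hcost : Dsait m + INR (length reps) * (1 + ln (INR (nkeys (Node reps ch)))) +
                    ceilR (Rpower m alpha) <= 13 * G).
    { unfold G; rewrite Hg. apply node_cost; auto. split. lra. exact Hk. }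
    set (x := Rpower m ((1 - g) / 2)).
    assert (Hx1 : 1 <= x) by (apply rp_ge1; lra).
    assert (Hqx : q * x = 1).
    { unfold q, x. rewrite <- Rpower_plus. replace ((g - 1) / 2 + (1 - g) / 2) with 0 by field.
      apply Rpower_O; lra. }
    assert (Hh : m * Rpower m (g - 1) = G).
    { unfold G. rewrite <- (Rpower_1 m) at 1 by lra. rewrite <- Rpower_plus. f_equal. ring. }
    assert (Hmq : q * m = G * x).
    { unfold q, G, x. rewrite <- (Rpower_1 m) at 2 by lra. rewrite <- !Rpower_plus. f_equal. field. }
    assert (HGx : G = Rpower x (2 * g / (1 - g))).
    { unfold G, x. rewrite Rpower_mult. f_equal. field. lra. }
    assert (Hp : 0 < 2 * g / (1 - g)) by (apply Rdiv_lt_0_compat; lra).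
    pose proof (final_ineq A G x q 0 _ Hx1 Hqx (Rlt_le _ _ (Rpower_pos _ _)) Hp HGx HA).
    assert (0 < q <= 1) by (split; nra).
    simpl build_time. fold m. rewrite Hh.
    assert ((A - q) * S <= (A - q) * (m - 1)) by (apply Rmult_le_compat_l; lra).
    nra.
Qed.

Theorem theorem5 (alpha : R) (Halpha : 1/2 <= alpha < 1) :
  exists C : R, 0 < C /\
    forall L : list key, valid_keys L ->
      let m := INR (mass_list L) in
      let n := INR (length L) in
      exists t : tree,
        is_gsat Dsait t L /\ ideal Dsait t /\
        build_time alpha t <= C * m /\
        memory alpha t <= C * (Rpower m (alpha / 2) * n + Rpower m alpha).
Proof.
  set (g := (1 + alpha) / 2).
  set (A := 14 * Rpower 14 (2 * g / (1 - g)) + 1).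
  assert (HA1 : 1 <= A) by (pose proof (Rpower_pos 14 (2 * g / (1 - g))); unfold A; lra).
  exists (Rmax A 3). split. { pose proof (Rmax_r A 3). lra. }
  intros L [_ Hcnt] m n.
  destruct (existence (length L) L eq_refl Hcnt) as (t & Hg & Hf & Hi).
  assert (Hct : cnt (flatten t)) by (rewrite Hf; exact Hcnt).
  assert (Hmt : INR (mass t) = m) by (unfold mass; rewrite Hf; reflexivity).
  assert (Hnt : INR (nkeys t) = n) by (unfold nkeys; rewrite Hf; reflexivity).
  exists t. split; [split; auto|]. split; [auto|].
  pose proof (Rmax_l A 3) as HCA. pose proof (Rmax_r A 3) as HC3.
  set (C := Rmax A 3) in *.
  assert (Hm0 : 0 <= m) by apply pos_INR.
  assert (Hn0 : 0 <= n) by apply pos_INR.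
  split.
  - pose proof (build_bound alpha g A Halpha eq_refl eq_refl t Hg Hi Hct) as Hb.
    rewrite Hmt in Hb. pose proof (Rpower_pos m (g - 1)).
    assert (0 <= m * Rpower m (g - 1)) by (apply Rmult_le_pos; lra).
    assert (A * m <= C * m) by (apply Rmult_le_compat_r; lra). lra.
  - pose proof (Rpower_pos m (alpha / 2)). pose proof (Rpower_pos m alpha).
    destruct Hg as [|reps ch Hne Hl Hk Hch].
    + simpl. assert (0 <= Rpower m (alpha / 2) * n) by (apply Rmult_le_pos; lra). nra.
    + destruct (get_info reps ch Hne Hl Hct) as [Em Ek Hrm Hrl Hcc Hchm Hm1 Hnk].
      rewrite Hmt in *. rewrite Hnt in *.
      inversion Hi as [|reps' ch' Hidc]; subst reps' ch'.
      set (s := sqrt m).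
      assert (Hs0 : 0 < s) by (apply sqrt_lt_R0; lra).
      assert (Hss : s * s = m) by (apply sqrt_sqrt; lra).
      set (Z := Rpower m (alpha / 2)).
      assert (HZ1 : 1 <= Z) by (apply rp_ge1; lra).
      assert (Hq : sqrt s <= Z).
      { rewrite <- (Rpower_sqrt s) by lra. unfold s. rewrite <- (Rpower_sqrt m) by lra.
        unfold Z. rewrite Rpower_mult. apply Rle_Rpower; lra. }
      assert (Hq2 : Rpower s alpha = Z).
      { unfold s, Z. rewrite <- Rpower_sqrt, Rpower_mult by lra. f_equal. field. }
      assert (Hchild : forall c, In c ch -> memory alpha c <= 3 * Z * INR (nkeys c)).
      { intros c Hin. destruct (Hidc c Hin) as [_ Hmc]. rewrite Hmt in Hmc.
        assert (Hmcs : INR (mass c) <= s).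
        { apply Rle_trans with (m / (s + 1)); auto. unfold Dsait; fold s.
          apply Rmult_le_reg_r with (s + 1). lra. field_simplify; nra. }
        pose proof (mem_bound alpha ltac:(lra) c (Hch c Hin) (Hcc c Hin) s Hmcs).
        rewrite Hq2 in H1. pose proof (pos_INR (nkeys c)). nra. }
      pose proof (sumR_le _ _ ch Hchild) as Hsum.
      rewrite (sumR_scal (3 * Z) (fun c => INR (nkeys c))), sum_nkeys in Hsum.
      simpl memory. rewrite Hmt. unfold Dsait. fold s.
      assert (s <= Rpower m alpha).
      { unfold s. rewrite <- Rpower_sqrt by lra. apply Rle_Rpower; lra. }
      assert (1 <= Rpower m alpha) by (apply rp_ge1; lra).
      pose proof (ceil_lt (Rpower m alpha)).
      pose proof (pos_INR (length reps)).
      assert (Z * INR (length (concat (map flatten ch))) <= Z * n) by (apply Rmult_le_compat_l; lra).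
      assert (0 <= Z * n) by nra.
      assert (3 * (Z * n + Rpower m alpha) <= C * (Z * n + Rpower m alpha)) by (apply Rmult_le_compat_r; lra).
      lra.
Qed.
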